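(* In the hierarchical partition construction described in the context, for every level $j$ and every $S\in\mathcal S_j$, the number of sets $S'\in\mathcal S_j$ (including $S$ itself) that $S$ knows is at most $\lambda^{3+\eta}$. Equivalently, $\bigcup\{B_{r_j}(v):v\in S\}$ intersects at most $\lambda^{3+\eta}$ sets of $\mathcal S_j$.
   Context: Let $(V,d)$ be a finite metric space with $|V|\ge 2$ which is doubling with constant $\lambda$: for every $v\in V$ and $r>0$ the open ball $B_{2r}(v)=\{u:d(u,v)<2r\}$ is contained in the union of at most $\lambda$ open balls $B_r(w)$, $w\in V$. Fix an integer $\eta\ge2$ and a real $\tau$ with $1+\frac{1}{2^{\eta-1}-1}\le\tau\le 2^{\eta}$. For $L\subseteq V$ and $r>0$, a greedy partition of $L$ with parameter $r$ is obtained by: set $L_0=L$; while $L_i\ne\emptyset$ choose any $v_i\in L_i$, let $P_i=\{u\in L_i: d(u,v_i)<2^{-\eta-1}r\}$ with leader $v_i$, and set $L_{i+1}=L_i\setminus P_i$. Hierarchical partition construction: choose $r_0$ with $0<r_0<\min_{u\ne v}d(u,v)$ and put $r_j=\tau^j r_0$. Let $\mathcal S_0=\{\{v\}:v\in V\}$, the leader of $\{v\}$ being $v$. While $\mathcal S_j$ has more than one element: let $L_j$ be the set of leaders of the sets in $\mathcal S_j$, let $\mathcal S'_{j+1}$ be a greedy partition of $L_j$ with parameter $2r_{j+1}$, and let $\mathcal S_{j+1}$ consist, for each $P\in\mathcal S'_{j+1}$, of the set $\bigcup\{S\in\mathcal S_j:\mathrm{leader}(S)\in P\}$, whose leader is defined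 to be the leader of $P$. Each $\mathcal S_j$ is a partition of $V$. For $S,S'\in\mathcal S_j$, $S$ knows $S'$ (at level $j$) if there are $v\in S$, $u\in S'$ with $d(v,u)<r_j$; $B_r(v)$ denotes the open ball $\{u\in V:d(u,v)<r\}$. *)

(* Defs.v *)
From HB Require Import structures.
From mathcomp Require Import all_boot all_order all_algebra.
Set Implicit Arguments. Unset Strict Implicit. Unset Printing Implicit Defensive.
Import Order.TTheory GRing.Theory Num.Theory.
Local Open Scope ring_scope.

Section Defs.
Variables (R : realFieldType) (V : finType) (d : V -> V -> R).

Definition is_metric : Prop :=
  [/\ forall x y, d x y = 0 <-> x = y,
      forall x y, d x y = d y x &
      forall x y z, d x z <= d x y + d y z].

Definition ball (v : V) (r : R) : {set V} := [set u | d u v < r].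

Definition doubling (lam : nat) : Prop :=
  forall (v : V) (r : R), 0 < r ->
    exists W : {set V}, (#|W| <= lam)%N /\
      ball v (2 * r) \subset \bigcup_(w in W) ball w r.

(* Greedy partition of L with radius rad (= 2^{-eta-1} r), driven by the
   sequence s of chosen leaders v_0, v_1, ...; output: list of (leader, block). *)
Fixpoint greedy_blocks (L : {set V}) (rad : R) (s : seq V) : seq (V * {set V}) :=
  match s with
  | [::] => [::]
  | v :: s' => let P := [set u in L | d u v < rad] in
               (v, P) :: greedy_blocks (L :\: P) rad s'
  end.

Fixpoint valid_greedy (L : {set V}) (rad : R) (s : seq V) : Prop :=
  match s with
  | [::] => L = set0
  | v :: s' => v \in L /\ valid_greedy (L :\: [set u in L | d u v < rad]) rad s'
  end.

(* a level of the hierarchy: list of (leader, set) pairs *)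
Definition level := seq (V * {set V}).

Definition leaders (S : level) : {set V} := [set p.1 | p in S].

Definition level0 : level := [seq (v, [set v]) | v <- enum V].

Definition next_level (S : level) (rad : R) (s : seq V) : level :=
  map (fun q : V * {set V} => (q.1, \bigcup_(p <- S | p.1 \in q.2) p.2))
      (greedy_blocks (leaders S) rad s).

(* H is a run of the hierarchical construction with parameters eta, tau, r0:
   H 0 = S_0, and while H j has more than one element, H (j+1) is obtained
   by a legal greedy partition of its leaders with parameter 2 r_{j+1}. *)
Definition hier_run (eta : nat) (tau r0 : R) (H : nat -> level) : Prop :=
  H 0%N = level0 /\
  forall j : nat, (1 < size (H j))%N ->
    exists s : seq V,
      valid_greedy (leaders (H j)) ((2 * (tau ^+ j.+1 * r0)) / 2 ^+ eta.+1) s /\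
      H j.+1 = next_level (H j) ((2 * (tau ^+ j.+1 * r0)) / 2 ^+ eta.+1) s.

Definition knows (rj : R) (S S' : {set V}) : bool :=
  [exists v in S, exists u in S', d v u < rj].

End Defs.

(* Main.v *)
Require Import Defs.
From HB Require Import structures.
From mathcomp Require Import all_boot all_order all_algebra.
Import Order.TTheory GRing.Theory Num.Theory.
Local Open Scope ring_scope.
Set Implicit Arguments. Unset Strict Implicit.
Section N.
Variables (R : realFieldType) (eta : nat) (tau : R).
Hypothesis heta : (2 <= eta)%N.
Hypothesis ht : 1 + 1 / (2 ^+ eta.-1 - 1) <= tau.

Let M : R := 2 ^+ eta.-1.
Lemma M2 : 2 <= M.
Proof.
rewrite /M; case: eta heta => [|[|e]] // _ /=.
rewrite exprS -[X in X <= _]mulr1 ler_pM2l //.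
by rewrite exprn_ege1 // ler1n.
Qed.
Lemma K4M : (2 : R) ^+ eta.+1 = 4 * M.
Proof.
rewrite /M; case: eta heta => [|e] // _ /=.
by rewrite !exprS mulrA -natrM.
Qed.
Lemma tau_M : tau <= (tau - 1) * M.
Proof.
have M1 : 0 < M - 1 by rewrite subr_gt0 (lt_le_trans _ M2) // ltr1n.
have h : 1 / (M - 1) <= tau - 1 by rewrite lerBrDl.
by move: h; rewrite ler_pdivrMr // mulrBr mulr1 lerBrDr addrC subrK.

Qed.
Lemma tau_gt1 : 1 < tau.
Proof.
have M1 : 0 < M - 1 by rewrite subr_gt0 (lt_le_trans _ M2) // ltr1n.
apply: lt_le_trans ht; rewrite ltrDl divr_gt0 //.
Qed.
Lemma K_gt0 : (0 : R) < 2 ^+ eta.+1.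
Proof. by rewrite exprn_gt0. Qed.

Lemma diam_step (a : R) : 0 <= a ->
  a / 2 + 2 * (a * tau) / 2 ^+ eta.+1 <= a * tau / 2.
Proof.
move=> a0; rewrite K4M.
have M0 : 0 < M by rewrite (lt_le_trans _ M2).
rewrite -lerBrDl -mulrBl.
have -> : a * tau - a = a * (tau - 1) by rewrite mulrBr mulr1.
rewrite ler_pdivrMr ?mulr_gt0 //.
have -> : a * (tau - 1) / 2 * (4 * M) = 2 * a * ((tau - 1) * M).
  rewrite -[4]/(2 * 2)%:R natrM.
  rewrite -mulrA -(mulrA 2 2 M) mulKf ?pnatr_eq0 //.
  by rewrite [2 * a]mulrC -!mulrA; congr (_ * _); rewrite mulrCA.
by rewrite -mulrA ler_wpM2l // ler_wpM2l // tau_M.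
Qed.
End N.

Section Metric.
Variables (R : realFieldType) (V : finType) (d : V -> V -> R).
Hypothesis hm : is_metric d.

Lemma d_refl x : d x x = 0. Proof. by case: hm => h _ _; apply/h. Qed.
Lemma d_sym x y : d x y = d y x. Proof. by case: hm. Qed.
Lemma d_tri x y z : d x z <= d x y + d y z. Proof. by case: hm. Qed.
Lemma d_ge0 x y : 0 <= d x y.
Proof.
have := d_tri x y x; rewrite d_refl (d_sym y x) => h.
rewrite leNgt; apply/negP => h'.
by have := ltrD h' h'; rewrite addr0 ltNge h.
Qed.

Variable lam : nat.
Hypothesis hd : doubling d lam.

Lemma cover_list (s : seq V) (r : R) : 0 < r ->
  exists W : {set V}, (#|W| <= lam * size s)%N /\
   forall x, (exists2 w, w \in s & d x w < 2 * r) -> exists2 w', w' \in W & d x w' < r.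
Proof.
move=> r0; elim: s => [|v s [W [hW1 hW2]]].
  by exists set0; rewrite cards0; split => // x [].
have [W' [hW'1 hW'2]] := hd v r0.
exists (W :|: W'); split.
  rewrite /= mulnS; apply: leq_trans (leq_card_setU _ _) _.
  by rewrite addnC leq_add.
move=> x [w]; rewrite inE => /orP [/eqP -> h|hw h].
  have : x \in ball d v (2 * r) by rewrite inE.
  move/(subsetP hW'2)/bigcupP => [w' hw' ]; rewrite inE => h'.
  by exists w' => //; rewrite inE hw' orbT.
have [w' hw' h'] := hW2 x (ex_intro2 _ _ w hw h).
by exists w' => //; rewrite inE hw'.
Qed.

Lemma cover_iter k : forall v (r : R), 0 < r ->
  exists W : {set V}, (#|W| <= lam ^ k)%N /\
   forall x, d x v < 2 ^+ k * r -> exists2 w', w' \in W & d x w' < r.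
Proof.
elim: k => [|k IH] v r r0.
  exists [set v]; rewrite cards1 expn0; split => // x; rewrite mul1r => h.
  by exists v; rewrite ?inE.
have r20 : 0 < 2 * r by rewrite mulr_gt0.
have [W [hW1 hW2]] := IH v _ r20.
have [W' [hW'1 hW'2]] := cover_list (enum W) r0.
exists W'; split.
  apply: leq_trans hW'1 _; rewrite -cardE expnS leq_mul2l hW1 orbT //.
move=> x hx; apply: hW'2.
have [w hw h] := hW2 x ltac:(by rewrite mulrA -exprSr).
by exists w; rewrite ?mem_enum.
Qed.

Lemma packing (W : {set V}) (rho : R) (A : seq V) :
  uniq A ->
  (forall x, x \in A -> exists2 w, w \in W & d x w < rho) ->
  (forall x y, x \in A -> y \in A -> x != y -> 2 * rho <= d x y) ->
  (size A <= #|W|)%N.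
Proof.
move=> uA hA hsep.
pose f x := odflt x [pick w in W | d x w < rho].
have fP x : x \in A -> (f x \in W) && (d x (f x) < rho).
  move=> /hA [w hw h]; rewrite /f; case: pickP => [w' /andP [-> ->] //|/(_ w)].
  by rewrite hw h.
rewrite -(card_uniqP uA).
have -> : #|A| = #|[set f x | x in A]|.
  apply/esym/card_in_imset => x y hx hy hf; apply/eqP/negPn/negP => hxy.
  have := hsep x y hx hy hxy.
  move: (fP x hx) (fP y hy) => /andP [_ h1] /andP [_ h2].
  have := d_tri x (f x) y; rewrite hf (d_sym (f y) y).
  move=> h3 h4; have : d x y < 2 * rho.
    apply: (le_lt_trans h3); rewrite -hf in h2 *; rewrite mulr_natl mulr2n; exact: ltrD.
  by rewrite ltNge h4.
apply: subset_leq_card; apply/subsetP => w /imsetP [x hx ->].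
by case/andP: (fP x hx).
Qed.

Lemma gb_fst L rad s : map fst (greedy_blocks d L rad s) = s.
Proof. by elim: s L => //= v s IH L; rewrite IH. Qed.

Lemma gb_rad L rad s c : c \in greedy_blocks d L rad s -> forall u, u \in c.2 -> d u c.1 < rad.
Proof.
elim: s L => //= v s IH L; rewrite inE => /orP [/eqP -> u|/IH //].
by rewrite inE => /andP [].
Qed.

Lemma vg_sep L rad s : 0 < rad -> valid_greedy d L rad s ->
  [/\ {subset s <= L}, uniq s &
   forall a b, a \in s -> b \in s -> a != b -> rad <= d a b].
Proof.
move=> r0; elim: s L => //= v s IH L [vL /IH [h1 h2 h3]].
have vn : v \notin s.
  by apply/negP => /h1; rewrite !inE d_refl r0 vL.
split; first by move=> x; rewrite inE => /orP [/eqP ->|/h1]; rewrite // inE => /andP [].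
  by rewrite vn.
have key a : a \in s -> rad <= d a v.
  by move/h1; rewrite !inE => /andP [h aL]; move: h; rewrite aL /= -leNgt.
move=> a b; rewrite !inE => /orP [/eqP ->|ha] /orP [/eqP ->|hb].
- by rewrite eqxx.
- by move=> _; rewrite d_sym key.
- by move=> _; rewrite key.
- exact: h3.
Qed.

Definition Inv (S : level V) (sep diam : R) :=
  [/\ uniq (map fst S),
      forall q1 q2, q1 \in S -> q2 \in S -> q1.1 != q2.1 -> sep <= d q1.1 q2.1 &
      forall q, q \in S -> forall x, x \in q.2 -> d x q.1 <= diam].

Lemma Inv_step S sep diam rad s : Inv S sep diam -> 0 < rad ->
  valid_greedy d (leaders S) rad s -> Inv (next_level d S rad s) rad (diam + rad).
Proof.
move=> [_ _ hD] r0 /(vg_sep r0) [_ us hs].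
have fst_nl : map fst (next_level d S rad s) = s.
  rewrite /next_level -map_comp -{2}(gb_fst (leaders S) rad s); exact: eq_map.
split; first by rewrite fst_nl.
  move=> q1 q2 h1 h2; apply: hs.
    by rewrite -fst_nl; apply: map_f.
  by rewrite -fst_nl; apply: map_f.
move=> q /mapP [c hc ->] /= x.
rewrite big_seq_cond.
apply: (big_ind (fun X : {set V} => x \in X -> d x c.1 <= diam + rad)).
- by rewrite inE.
- by move=> X Y hX hY; rewrite inE => /orP [/hX|/hY].
move=> p /andP [pS pc] xp.
apply: le_trans (d_tri x p.1 c.1) _; apply: lerD.
  exact: hD xp.
exact/ltW/(gb_rad hc).
Qed.
Lemma Inv_le S sep d1 d2 : d1 <= d2 -> Inv S sep d1 -> Inv S sep d2.
Proof. by move=> h [a b c]; split => // q hq x hx; apply: le_trans (c q hq x hx) h. Qed.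
End Metric.

Theorem lemma3 (R : realFieldType) (V : finType) (d : V -> V -> R)
  (lam eta : nat) (tau r0 : R) (H : nat -> level V) :
  is_metric d ->
  (2 <= #|V|)%N ->
  doubling d lam ->
  (2 <= eta)%N ->
  1 + 1 / (2 ^+ eta.-1 - 1) <= tau -> tau <= 2 ^+ eta ->
  0 < r0 -> (forall u v : V, u != v -> r0 < d u v) ->
  hier_run d eta tau r0 H ->
  forall j : nat, (forall i : nat, (i < j)%N -> (1 < size (H i))%N) ->
  forall p, p \in H j ->
    (count (fun q : V * {set V} => knows d (tau ^+ j * r0) p.2 q.2) (H j)
       <= lam ^ (3 + eta))%N.
Proof.
move=> hm _ hd heta ht _ r0p hsep [H0 Hs].
have t1 := tau_gt1 heta ht.
have t0 : 0 < tau by apply: lt_trans t1.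
have K0 : (0 : R) < 2 ^+ eta.+1 by rewrite exprn_gt0.
have a0 j : 0 < tau ^+ j * r0 by rewrite mulr_gt0 // exprn_gt0.
have inv j : (forall i, (i < j)%N -> (1 < size (H i))%N) ->
    Inv d (H j) (2 * (tau ^+ j * r0) / 2 ^+ eta.+1) (tau ^+ j * r0 / 2).
  elim: j => [_|j IH hj].
    rewrite H0 expr0 mul1r; split.
    - by rewrite /level0 -map_comp map_id enum_uniq.
    - move=> q1 q2 /mapP [u _ ->] /mapP [v _ ->] /= huv.
      apply: le_trans (ltW (hsep _ _ huv)).
      rewrite ler_pdivrMr // mulrC ler_wpM2l ?ltW //.
      rewrite exprS ltr_pMr // exprn_egt1 ?ltr1n //. by case: (eta) heta.
    - move=> q /mapP [v _ ->] x /=; rewrite inE => /eqP ->.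
      by rewrite (d_refl hm) divr_ge0 // ltW.
  have [s [hv ->]] := Hs j (hj j (ltnSn j)).
  have I0 := IH (fun i hi => hj i (ltnW hi)).
  apply: Inv_le; last first.
    apply: (Inv_step hm) I0 _ hv.
    by rewrite divr_gt0 // mulr_gt0.
  rewrite exprSr !(mulrAC _ tau r0).
  exact: diam_step (ltW (a0 j)).
move=> j hj p hp.
have [hU hS hD] := inv j hj.
set a := tau ^+ j * r0.
set P := (fun q : V * {set V} => knows d a p.2 q.2).
set A := map fst (filter P (H j)).
have uA : uniq A.
  apply: (subseq_uniq _ hU); apply: map_subseq; exact: (filter_subseq P (H j)).
have rho0 : 0 < a / 2 ^+ eta.+1 by rewrite divr_gt0 ?a0.
have [W [hW1 hW2]] := cover_iter hd eta.+2 p.1 rho0.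

rewrite -size_filter -(size_map fst).
apply: (@leq_trans #|W|).
  apply: (packing hm uA).
    move=> x /mapP [q]; rewrite mem_filter => /andP [/existsP [v /andP [vp /existsP [u /andP [uq duv]]]] hq] ->.
    apply: hW2.
    have -> : 2 ^+ eta.+2 * (a / 2 ^+ eta.+1) = 2 * a.
      by rewrite exprS -mulrA [2 ^+ eta.+1 * _]mulrC mulfVK // gt_eqF.
    apply: le_lt_trans (d_tri hm _ u _) _.
    have -> : 2 * a = a / 2 + (a + a / 2).
      by rewrite addrCA -splitr mulr_natl mulr2n.
    apply: ler_ltD; first by rewrite (d_sym hm); exact: hD hq _ uq.
    apply: le_lt_trans (d_tri hm _ v _) _.
    apply: ltr_leD; first by rewrite (d_sym hm).
    exact: hD hp _ vp.
  move=> x y /mapP [q1]; rewrite mem_filter => /andP [_ h1] -> /mapP [q2].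
  rewrite mem_filter => /andP [_ h2] -> hne.
  by rewrite mulrA; apply: hS.
apply: leq_trans hW1 _.
case: lam {hd W hW2} => [|l]; first by rewrite !exp0n.
by rewrite leq_pexp2l // addnC.
Qed.
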